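(* There is $k_0$ such that for every $k\geq k_0$ the following holds. Let $G$ be a finite bipartite graph with vertex classes $A$ and $B$ satisfying $\Delta(G)\leq k^7$, $d(G)\geq k/4$, and $d_G(v)\leq k$ for every $v\in A$. Then $G$ contains a subgraph with maximum degree at most $k$ and average degree at least $k/(400\log k)$.
   Context: $d(G)=2e(G)/|V(G)|$ is the average degree, $d_G(v)$ the degree of $v$, $\Delta(G)$ the maximum degree. Logarithms are to base $2$. *)

(* Defs.v *)
From Stdlib Require Import Reals.
From mathcomp Require Import all_boot.
Set Implicit Arguments. Unset Strict Implicit. Unset Printing Implicit Defensive.

Section Graphs.
Variable T : finType.

Definition simple_graph (V : {set T}) (E : rel T) : Prop :=
  symmetric E /\ irreflexive E /\ (forall x y, E x y -> x \in V /\ y \in V).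

Definition deg (E : rel T) (v : T) : nat := #|[set w | E v w]|.

Definition edge_set (E : rel T) : {set {set T}} :=
  [set s | [exists x, exists y, E x y && (s == [set x; y])]].

Definition num_edges (E : rel T) : nat := #|edge_set E|.

(* d(G) = 2 e(G) / |V(G)|  (real division; 0 for the empty graph) *)
Definition avg_deg (V : {set T}) (E : rel T) : R :=
  Rdiv (Rmult 2 (INR (num_edges E))) (INR #|V|).

Definition max_deg_le (V : {set T}) (E : rel T) (m : nat) : Prop :=
  forall v, v \in V -> deg E v <= m.

Definition subgraph (VH : {set T}) (EH : rel T) (V : {set T}) (E : rel T) : Prop :=
  simple_graph VH EH /\ VH \subset V /\ (forall x y, EH x y -> E x y).

Definition bipartite_classes (V : {set T}) (E : rel T) (A B : {set T}) : Prop :=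
  A :&: B = set0 /\ A :|: B = V /\
  (forall x y, E x y -> (x \in A /\ y \in B) \/ (x \in B /\ y \in A)).
End Graphs.

Definition log2 (x : R) : R := Rdiv (ln x) (ln 2).

(* Main.v *)
Require Import Defs.
From Stdlib Require Import Reals ZArith Lra Psatz.
From mathcomp Require Import all_boot zify.
Delimit Scope R_scope with Re.
Set Implicit Arguments. Unset Strict Implicit. Unset Printing Implicit Defensive.

Section Core.
Variables (T : finType) (E : rel T) (Y : {set T}) (M : nat).

Definition w (u z : T) : nat := \sum_(y in Y) (E y u && E y z).
Definition Phi (c : {ffun T -> 'I_M}) : nat :=
  \sum_(u : T) \sum_(z : T) w u z * (c u == c z).
Definition hh (c : {ffun T -> 'I_M}) (x : T) (j : 'I_M) : nat :=
  \sum_(z | z != x) w x z * (j == c z).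
Definition RR (c : {ffun T -> 'I_M}) (x : T) : nat :=
  \sum_(u | u != x) \sum_(z | z != x) w u z * (c u == c z).

Lemma wC u z : w u z = w z u.
Proof. by apply: eq_bigr => y _; rewrite andbC. Qed.

Lemma Phi_decomp c x : Phi c = w x x + 2 * hh c x (c x) + RR c x.
Proof.
rewrite /Phi (bigD1 x) //= (bigD1 x) //= eqxx muln1.
have -> : \sum_(u | u != x) \sum_z w u z * (c u == c z) =
  hh c x (c x) + RR c x.
  rewrite /RR /hh -big_split /=; apply: eq_bigr => u ux.
  rewrite (bigD1 x) //= wC eq_sym; congr (_ + _).
rewrite /hh; lia.
Qed.

Definition upd (c : {ffun T -> 'I_M}) x j : {ffun T -> 'I_M} :=
  [ffun z => if z == x then j else c z].

Lemma hh_upd c x j j' : hh (upd c x j) x j' = hh c x j'.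
Proof.
by apply: eq_bigr => z zx; rewrite /upd ffunE (negbTE zx).
Qed.

Lemma RR_upd c x j : RR (upd c x j) x = RR c x.
Proof.
apply: eq_bigr => u ux; apply: eq_bigr => z zx.
by rewrite /upd !ffunE (negbTE zx) (negbTE ux).
Qed.

Lemma local_min c x j : (forall c', Phi c <= Phi c') -> hh c x (c x) <= hh c x j.
Proof.
move=> H; have := H (upd c x j).
rewrite (Phi_decomp c x) (Phi_decomp (upd c x j) x) hh_upd RR_upd /upd ffunE eqxx.
lia.
Qed.

Lemma sum_hh c x : \sum_(j < M) hh c x j = \sum_(z | z != x) w x z.
Proof.
rewrite /hh exchange_big /=; apply: eq_bigr => z _.
rewrite -big_distrr /=.
rewrite (bigD1 (c z)) //= eqxx big1 ?addn0 ?muln1 // => j /negbTE ->.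
done.
Qed.

Lemma Phi_diag c : Phi c = \sum_u w u u + \sum_u hh c u (c u).
Proof.
rewrite /Phi -big_split /=; apply: eq_bigr => u _.
by rewrite (bigD1 u) //= eqxx muln1.
Qed.

Lemma Phi_bound c : (forall c', Phi c <= Phi c') ->
  M * Phi c <= M * \sum_u w u u + \sum_u \sum_z w u z.
Proof.
move=> H.
have Hs : \sum_u M * hh c u (c u) <= \sum_u \sum_z w u z.
  apply: leq_sum => u _.
  apply: (@leq_trans (\sum_(j < M) hh c u j)).
    rewrite -[X in X * _]card_ord -sum1_card big_distrl /=.
    by apply: leq_sum => j _; rewrite mul1n local_min.
  rewrite sum_hh [X in _ <= X](bigD1 u) //=. apply: leq_addl.
rewrite Phi_diag mulnDr; apply: leq_add => //; rewrite big_distrr; exact: Hs.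
Qed.


Definition dg (y : T) : nat := #|[set x | E y x]|.
Definition dj (c : {ffun T -> 'I_M}) (y : T) (j : 'I_M) : nat :=
  #|[set x | E y x & c x == j]|.

Lemma card_sum (P : pred T) : #|[set u | P u]| = \sum_u (P u : nat).
Proof.
rewrite -sum1_card big_mkcond /=; apply: eq_bigr => u _.
by rewrite inE; case: (P u).
Qed.

Lemma sum_wdiag : \sum_u w u u = \sum_(y in Y) dg y.
Proof.
rewrite /w exchange_big /=; apply: eq_bigr => y _.
by rewrite /dg card_sum; apply: eq_bigr => u _; rewrite andbb.
Qed.

Lemma sum_wall : \sum_u \sum_z w u z = \sum_(y in Y) dg y ^ 2.
Proof.
rewrite /w.
under eq_bigr => u _ do rewrite exchange_big /=.
rewrite exchange_big /=; apply: eq_bigr => y _.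
rewrite /dg card_sum expnS expn1 big_distrl /=; apply: eq_bigr => u _.
rewrite big_distrr /=; apply: eq_bigr => z _.
by case: (E y u); case: (E y z).
Qed.

Lemma Phi_dj c : Phi c = \sum_(y in Y) \sum_(j < M) dj c y j ^ 2.
Proof.
rewrite /Phi /w.
under eq_bigr => u _ do (under eq_bigr => z _ do rewrite big_distrl /=; rewrite exchange_big /=).
rewrite exchange_big /=; apply: eq_bigr => y _.
symmetry.
under eq_bigr => j _ do rewrite /dj (card_sum (fun x => E y x && (c x == j))) expnS expn1 big_distrl /=.
rewrite exchange_big /=; apply: eq_bigr => u _.
under eq_bigr => j _ do rewrite big_distrr /=.
rewrite exchange_big /=; apply: eq_bigr => z _.
rewrite (bigD1 (c u)) //= big1 => [|j /negbTE jn]; last by rewrite eq_sym jn andbF.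
by rewrite addn0 eqxx andbT [c z == _]eq_sym; case: (E y u); case: (E y z); case: (c u == c z).
Qed.

Lemma sum_dj c y : \sum_(j < M) dj c y j = dg y.
Proof.
have Hd : forall j, dj c y j = \sum_x (E y x && (c x == j) : nat).
  by move=> j; exact: (card_sum (fun x => E y x && (c x == j))).
under eq_bigr => j _ do rewrite Hd.
rewrite /dg card_sum.
rewrite exchange_big /=; apply: eq_bigr => x _.
rewrite (bigD1 (c x)) //= big1 => [|j /negbTE jn]; last by rewrite eq_sym jn andbF.
by rewrite eqxx andbT addn0.
Qed.

Lemma core_bound c k : 0 < M -> 0 < k -> (forall c', Phi c <= Phi c') ->
  (forall y, y \in Y -> dg y <= 2 * M * k) ->
  \sum_(y in Y) dg y <= 4 * \sum_(y in Y) \sum_(j < M) minn (dj c y j) k.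
Proof.
move=> M0 k0 Hmin Hdeg.
have H1 := Phi_bound Hmin.
rewrite sum_wdiag sum_wall in H1.
have H2 : \sum_(y in Y) dg y ^ 2 <= M * (2 * k) * \sum_(y in Y) dg y.
  rewrite big_distrr /=; apply: leq_sum => y yY.
  rewrite expnS expn1 leq_mul2r; apply/orP; right.
  have := Hdeg y yY; lia.
have H3 : Phi c <= (2 * k + 1) * \sum_(y in Y) dg y.
  have : M * Phi c <= M * ((2 * k + 1) * \sum_(y in Y) dg y).
    apply: (leq_trans H1); nia.
  by rewrite leq_pmul2l.
have H4 : 4 * k * \sum_(y in Y) dg y <=
  4 * k * \sum_(y in Y) \sum_(j < M) minn (dj c y j) k + Phi c.
  rewrite Phi_dj !big_distrr -big_split /=; apply: leq_sum => y _.
  rewrite -(sum_dj c y) !big_distrr -big_split /=; apply: leq_sum => j _.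
  set d := dj c y j.
  case: (leqP d k) => hd.
    nia.
  have h : (0 <= (Z.of_nat d - 2 * Z.of_nat k) * (Z.of_nat d - 2 * Z.of_nat k))%Z by apply: Z.square_nonneg.
  nia.
nia.
Qed.

End Core.

Lemma card_sumG (U : finType) (P : pred U) : #|[set u | P u]| = \sum_u (P u : nat).
Proof.
rewrite -sum1_card big_mkcond /=; apply: eq_bigr => u _.
by rewrite inE; case: (P u).
Qed.

Section Count.
Variables (T : finType) (R : rel T) (A B : {set T}).
Hypothesis Rsym : symmetric R.
Hypothesis AB : A :&: B = set0.
Hypothesis Rbip : forall x y, R x y -> (x \in A /\ y \in B) \/ (x \in B /\ y \in A).

Lemma notAB x : x \in A -> x \in B -> False.
Proof.
move=> xA xB; have : x \in A :&: B by rewrite inE xA xB.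
by rewrite AB inE.
Qed.

Let P := [set p : T * T | (p.1 \in B) && R p.1 p.2].

Lemma edge_set_eq : edge_set R = [set [set p.1; p.2] | p in P].
Proof.
apply/setP => s; rewrite /edge_set inE; apply/idP/idP.
  case/existsP => x /existsP [y /andP [Rxy /eqP ->]].
  case: (Rbip Rxy) => [[xA yB]|[xB yA]].
    apply/imsetP; exists (y, x); first by rewrite inE /= yB Rsym.
    by rewrite /= setUC.
  apply/imsetP; exists (x, y) => //; by rewrite inE /= xB.
case/imsetP => [[x y]]; rewrite inE /= => /andP [xB Rxy] ->.
by apply/existsP; exists x; apply/existsP; exists y; rewrite Rxy eqxx.
Qed.

Lemma num_edges_eq : num_edges R = \sum_(b in B) deg R b.
Proof.
rewrite /num_edges edge_set_eq card_in_imset.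
  rewrite /P card_sumG /deg.
  under [RHS]eq_bigr => b _ do rewrite card_sumG.
  rewrite (pair_big_dep (fun b => b \in B) (fun _ _ => true) (fun b w => (R b w : nat))) /=.
  rewrite [RHS]big_mkcond /=; apply: eq_bigr => [[b w]] _ /=.
  by rewrite andbT; case: (b \in B).
move=> [x y] [x' y']; rewrite !inE /= => /andP [xB Rxy] /andP [x'B Rx'y'] E.
have yA : y \in A by case: (Rbip Rxy) => [[xA _]|[_ ->]] //; case: (notAB xA xB).
have y'A : y' \in A by case: (Rbip Rx'y') => [[xA _]|[_ ->]] //; case: (notAB xA x'B).
have : x \in [set x'; y'] by rewrite -E set21.
rewrite !inE => /orP [/eqP xx|/eqP xy]; last by subst; case: (notAB y'A xB).
have : y \in [set x'; y'] by rewrite -E set22.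
rewrite !inE => /orP [/eqP yx|/eqP yy]; last by subst.
by subst; case: (notAB yA x'B).
Qed.

End Count.

Lemma mediant (M : nat) (f g : 'I_M -> nat) : 0 < M ->
  exists j, g j * (\sum_i f i) <= f j * (\sum_i g i).
Proof.
move=> M0.
case: (boolP [exists j, g j * (\sum_i f i) <= f j * (\sum_i g i)]) => [/existsP//|].
rewrite negb_exists => /forallP H; exfalso.
have : \sum_(j < M) (f j * (\sum_i g i) + 1) <= \sum_(j < M) g j * (\sum_i f i).
  by apply: leq_sum => j _; rewrite addn1 ltnNge H.
rewrite -big_distrl /= big_split /= sum1_card card_ord -big_distrl /=.
rewrite mulnC; lia.
Qed.

Lemma card_take_set (U : finType) (S : {set U}) (k : nat) :
  #|[set x in take k (enum S)]| = minn #|S| k.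
Proof.
rewrite cardsE; move/card_uniqP: (take_uniq k (enum_uniq (mem S))) => ->.
by rewrite size_take_min -cardE minnC.
Qed.

Lemma sum_sub_le (U : finType) (Y B : {set U}) (f : U -> nat) :
  Y \subset B -> \sum_(y in Y) f y <= \sum_(y in B) f y.
Proof.
move=> YB; rewrite [X in X <= _]big_mkcond [X in _ <= X]big_mkcond /=.
apply: leq_sum => y _; case yY: (y \in Y) => //.
by rewrite (subsetP YB y yY).
Qed.

Section Build.
Variables (T : finType) (E : rel T) (A B : {set T}) (k : nat).
Hypothesis Hs : simple_graph [set: T] E.
Hypothesis Hb : bipartite_classes [set: T] E A B.
Hypothesis HA : forall v, v \in A -> deg E v <= k.
Hypothesis k0 : 0 < k.

Lemma build (Y : {set T}) (M : nat) : 0 < M -> Y \subset B ->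
  (forall y, y \in Y -> deg E y <= 2 * M * k) ->
  exists VH (EH : rel T), subgraph VH EH [set: T] E /\ max_deg_le VH EH k /\
    Y \subset VH /\
    (\sum_(y in Y) deg E y) * #|VH| <= 4 * num_edges EH * (M * #|Y| + #|T|).
Proof.
move=> M0 YB Hdeg.
have [Esym [Eirr Ein]] := Hs.
have [AB [ABV Ebip]] := Hb.
pose c0 : {ffun T -> 'I_M} := [ffun _ => Ordinal M0].
pose c := [arg min_(c < c0) Phi E Y c].
have cmin : forall c' : {ffun T -> 'I_M}, Phi E Y c <= Phi E Y c'.
  move=> c'; rewrite /c; case: arg_minnP => // c1 _ H; exact: H.
have core := core_bound M0 k0 cmin Hdeg.
pose Ej j := \sum_(y in Y) minn (dj E c y j) k.
pose Vj j := Y :|: [set x | c x == j].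
have [j Hj] := mediant Ej (fun j => #|Vj j|) M0.
have SE : \sum_(y in Y) \sum_(j < M) minn (dj E c y j) k = \sum_j Ej j.
  by rewrite exchange_big.
have SV : \sum_j #|Vj j| <= M * #|Y| + #|T|.
  apply: (@leq_trans (\sum_(j < M) (#|Y| + #|[set x | c x == j]|))).
    by apply: leq_sum => i _; rewrite leq_card_setU.
  rewrite big_split /= sum_nat_const card_ord leq_add2l.
  under eq_bigr => i _ do rewrite card_sumG.
  rewrite exchange_big /= -[X in _ <= X]sum1_card.
  apply: leq_sum => x _.
  by rewrite (bigD1 (c x)) //= eqxx big1 // => i /negbTE; rewrite eq_sym => ->.
pose Sy y := [set x in take k (enum [set x | E y x & c x == j])].
have Sy_sub : forall u v, v \in Sy u -> E u v && (c v == j).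
  move=> u v; rewrite inE => /mem_take; rewrite mem_enum inE //.
have Sy_card : forall y, #|Sy y| = minn (dj E c y j) k.
  by move=> y; rewrite card_take_set.
pose EH := [rel u v | ((u \in Y) && (v \in Sy u)) || ((v \in Y) && (u \in Sy v))].
have EHE : forall u v, EH u v -> E u v.
  move=> u v /orP [/andP [_ /Sy_sub /andP [-> _]] // | /andP [_ /Sy_sub /andP [Evu _]]].
  by rewrite Esym.
have EHsym : symmetric EH by move=> u v; rewrite /EH /= orbC.
exists (Vj j), EH; split; last split; last split.
- split; last split.
  + split; first exact: EHsym.
    split.
      move=> u; apply/negP => /EHE; by rewrite Eirr.
    move=> u v /orP [/andP [uY /Sy_sub /andP [_ cv]] | /andP [vY /Sy_sub /andP [_ cu]]].
      by rewrite !inE uY cv orbT.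
    by rewrite !inE vY cu orbT.
  + exact: subsetT.
  + exact: EHE.
- move=> v _; case vA: (v \in A).
    apply: (leq_trans _ (HA vA)); rewrite /deg; apply: subset_leq_card.
    by apply/subsetP => w; rewrite !inE => /EHE.
  apply: (@leq_trans #|Sy v|); last by rewrite Sy_card geq_minr.
  rewrite /deg; apply: subset_leq_card; apply/subsetP => w; rewrite inE.
  case/orP => [/andP [_ //] | /andP [wY /Sy_sub /andP [Ewv _]]].
  case: (Ebip _ _ Ewv) => [[wA _]|[_ vA']]; last by rewrite vA' in vA.
  exfalso; apply: (notAB AB wA); exact: (subsetP YB w wY).
- exact: subsetUl.
have HEH : Ej j <= num_edges EH.
  rewrite (num_edges_eq EHsym AB) => [|x y /EHE /Ebip //].
  apply: (leq_trans _ (sum_sub_le _ YB)).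
  apply: leq_sum => y yY; rewrite -Sy_card /deg; apply: subset_leq_card.
  by apply/subsetP => w wS; rewrite inE /= yY wS.
rewrite SE in core.
rewrite /dg in core.
have SVn := SV.
move: core Hj SVn HEH.
set eY := \sum_(y in Y) _.
set sE := \sum_j Ej j.
set sV := \sum_j #|Vj j|.
move=> core Hj SVn HEH.
nia.
Qed.

End Build.

Lemma main_nat (k : nat) (T : finType) (E : rel T) (A B : {set T}) :
  0 < k ->
  simple_graph [set: T] E -> bipartite_classes [set: T] E A B ->
  max_deg_le [set: T] E (k ^ 7) ->
  (forall v, v \in A -> deg E v <= k) ->
  0 < num_edges E -> k * #|T| <= 8 * num_edges E ->
  exists VH (EH : rel T), subgraph VH EH [set: T] E /\ max_deg_le VH EH k /\
    0 < #|VH| /\ k * #|VH| <= 4 * (16 * (6 * (trunc_log 2 k).+1) + 17) * num_edges EH.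
Proof.
move=> k0 Hs Hb Hmax HA e0 Hkn.
have [Esym [Eirr Ein]] := Hs.
have [AB [ABV Ebip]] := Hb.
set m := 6 * (trunc_log 2 k).+1.
have Hm : k ^ 7 <= 2 ^ m * k.
  have h1 : k <= 2 ^ (trunc_log 2 k).+1 by apply: ltnW; apply: trunc_log_ltn.
  have h2 : k ^ 6 <= 2 ^ m.
    by rewrite /m mulnC expnM leq_exp2r.
  by rewrite expnSr leq_mul2r h2 orbT.
pose Yt (t : nat) := [set b in B | ((t == 0) || (2 ^ t.-1 * k < deg E b)) && (deg E b <= 2 ^ t * k)].
pose et (t : nat) := \sum_(b in Yt t) deg E b.
have cover : num_edges E <= \sum_(t < m.+1) et t.
  rewrite (num_edges_eq Esym AB Ebip).
  apply: (@leq_trans (\sum_(b in B) \sum_(t < m.+1) deg E b * (b \in Yt t))).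
    apply: leq_sum => b bB.
    have exP : exists t, deg E b <= 2 ^ t * k.
      by exists m; apply: leq_trans (Hmax b (in_setT b)) Hm.
    case: (ex_minnP exP) => t0 Pt0 t0min.
    have t0m : t0 < m.+1.
      by rewrite ltnS; apply: t0min; apply: leq_trans (Hmax b (in_setT b)) Hm.
    rewrite (bigD1 (Ordinal t0m)) //=.
    have -> : b \in Yt t0.
      rewrite inE bB Pt0 andbT /=.
      case: t0 Pt0 t0min {t0m} => [//|t0] Pt0 t0min /=.
      rewrite ltnNge; apply/negP => H; have := t0min _ H; by rewrite ltnn.
    by rewrite muln1 leq_addr.
  rewrite exchange_big /=; apply: leq_sum => t _.
  rewrite /et [X in _ <= X]big_mkcond [X in X <= _]big_mkcond /=.
  apply: leq_sum => b _.
  case bY: (b \in Yt t); last by case: (b \in B); rewrite ?muln0.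
  have : b \in B by move: bY; rewrite inE => /andP [].
  by move=> ->; rewrite muln1.
pose t0 : 'I_m.+1 := ord0.
pose t := [arg max_(t > t0) et t].
have tmax : forall t' : 'I_m.+1, et t' <= et t.
  move=> t'; rewrite /t; case: arg_maxnP => // t1 _ H; exact: H.
have He : num_edges E <= m.+1 * et t.
  apply: (leq_trans cover).
  rewrite -[X in _ <= X * _](card_ord m.+1) -sum_nat_const.
  by apply: leq_sum => i _.
set M := 2 ^ (nat_of_ord t).-1.
set Y := Yt t.
have M0 : 0 < M by rewrite expn_gt0.
have YB : Y \subset B by apply/subsetP => b; rewrite inE => /andP [].
have Ydeg : forall y, y \in Y -> deg E y <= 2 * M * k.
  move=> y; rewrite inE => /andP [_ /andP [_ H]]; apply: (leq_trans H).
  rewrite leq_mul2r /M; apply/orP; right.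
  case: (nat_of_ord t) => [|s] //=; by rewrite expnS.
have [VH [EH [Hsub [Hmd [YV Hin]]]]] := build Hs Hb HA k0 M0 YB Ydeg.
have HMY : k * (M * #|Y|) <= et t + k * #|T|.
  case t0E: (nat_of_ord t == 0).
    rewrite /M (eqP t0E) /= mul1n; apply: leq_trans (leq_addl _ _).
    by rewrite leq_mul2l max_card orbT.
  apply: leq_trans (leq_addr _ _).
  have -> : k * (M * #|Y|) = #|Y| * (M * k) by lia.
  rewrite -sum_nat_const /et /Y; apply: leq_sum => y.
  rewrite inE t0E /= => /andP [_ /andP [H _]].
  exact: ltnW.
have et0 : 0 < et t.
  move: e0 He; nia.
have [y yY] : exists y, y \in Y.
  case: (set_0Vmem Y) => [Y0|[x xY]]; last by exists x. move: et0; by rewrite /et -/Y Y0 big_set0.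
exists VH, EH; split => //; split => //; split.
  by apply/card_gt0P; exists y; apply: (subsetP YV).
have : et t * (k * #|VH|) <= et t * (4 * (16 * m + 17) * num_edges EH).
  move: Hin He Hkn HMY; rewrite -/(et t) -/Y.
  set a := et t; set v := #|VH|; set h := num_edges EH; set e := num_edges E.
  set n := #|T|; set y' := M * #|Y|.
  move=> Hin He Hkn HMY.
  nia.
by rewrite leq_pmul2l.
Qed.

Lemma INR_exp2 (n : nat) : INR (2 ^ n) = (2 ^ n)%Re.
Proof.
elim: n => [|n IH]; first by rewrite expn0 /=.
by rewrite expnS -multE mult_INR IH /=; ring.
Qed.

Lemma INR4le (k : nat) : 4 <= k -> (4 <= INR k)%Re.
Proof.
move=> hk; replace 4%Re with (INR 4) by (simpl; ring).
by apply: le_INR; apply/leP.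
Qed.

Theorem lemma9 :
  exists k0 : nat, forall k : nat, k0 <= k ->
  forall (T : finType) (E : rel T) (A B : {set T}),
    simple_graph [set: T] E ->
    bipartite_classes [set: T] E A B ->
    max_deg_le [set: T] E (k ^ 7) ->
    Rle (Rdiv (INR k) 4) (avg_deg [set: T] E) ->
    (forall v, v \in A -> deg E v <= k) ->
    exists (VH : {set T}) (EH : rel T),
      subgraph VH EH [set: T] E /\
      max_deg_le VH EH k /\
      Rle (Rdiv (INR k) (Rmult 400 (log2 (INR k)))) (avg_deg VH EH).
Proof.
exists 4 => k hk T E A B Hs Hb Hmax Havg HA.
have k0 : 0 < k by apply: leq_trans hk.
have Rk4 := INR4le hk.
move: Havg; rewrite /avg_deg cardsT => Havg.
have e0 : 0 < num_edges E.
  rewrite lt0n; apply/negP => /eqP He.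
  rewrite He /= in Havg.
  have : (2 * 0 / INR #|T| = 0)%Re by rewrite /Rdiv; ring.
  move=> H; rewrite H in Havg; lra.
have n0 : 0 < #|T|.
  rewrite lt0n; apply/negP => /eqP Hn.
  rewrite Hn /= /Rdiv Rinv_0 Rmult_0_r in Havg; lra.
have Rn0 : (0 < INR #|T|)%Re by apply: lt_0_INR; apply/ltP.
have Hkn : k * #|T| <= 8 * num_edges E.
  have H := Rmult_le_compat_r (4 * INR #|T|) _ _ (ltac:(lra)) Havg.
  replace (INR k / 4 * (4 * INR #|T|))%Re with (INR k * INR #|T|)%Re in H by (field).
  replace (2 * INR (num_edges E) / INR #|T| * (4 * INR #|T|))%Re
    with (8 * INR (num_edges E))%Re in H by (field; lra).
  apply/leP; apply: INR_le.
  rewrite -multE !mult_INR; replace (INR 8) with 8%Re by (simpl; ring); exact: H.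
have [VH [EH [Hsub [Hmd [V0 Hk]]]]] := main_nat k0 Hs Hb Hmax HA e0 Hkn.
exists VH, EH; split => //; split => //.
set tl := trunc_log 2 k in Hk.
have tl2 : 2 <= tl by apply: trunc_log_max.
have Hk' : k * #|VH| <= (384 * tl + 452) * num_edges EH.
  apply: (leq_trans Hk); rewrite leq_mul2r; apply/orP; right; lia.
have RHk : (INR k * INR #|VH| <= (384 * INR tl + 452) * INR (num_edges EH))%Re.
  have := le_INR _ _ (elimT leP Hk').
  rewrite -multE -plusE !mult_INR plus_INR !mult_INR.
  by replace (INR 384) with 384%Re by (simpl; ring); replace (INR 452) with 452%Re by (simpl; ring).
have Rtl : (2 <= INR tl)%Re.
  replace 2%Re with (INR 2) by (simpl; ring); by apply: le_INR; apply/leP.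
have Rk0 : (0 < INR k)%Re by lra.
have L1 : (INR tl <= log2 (INR k))%Re.
  rewrite /log2.
  have ln2 : (0 < ln 2)%Re by have := ln_lt_2; lra.
  apply: (Rmult_le_reg_r (ln 2)) => //.
  rewrite /Rdiv Rmult_assoc Rinv_l ?Rmult_1_r; last by lra.
  have Hp : (2 ^ tl <= INR k)%Re.
    have H2 : 2 ^ tl <= k by apply: trunc_logP.
    have := le_INR _ _ (elimT leP H2).
    by rewrite INR_exp2.
  have Hp0 : (0 < 2 ^ tl)%Re by apply: pow_lt; lra.
  rewrite -ln_pow; last by lra.
  case: (Rle_lt_or_eq_dec _ _ Hp) => [Hlt|->]; last by lra.
  by left; apply: ln_increasing.
have Lpos : (0 < log2 (INR k))%Re by lra.
have V0' : (0 < INR #|VH|)%Re by apply: lt_0_INR; apply/ltP.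
have Eh0 : (0 <= INR (num_edges EH))%Re by apply: pos_INR.
have key : (INR k * INR #|VH| <= 800 * log2 (INR k) * INR (num_edges EH))%Re by nra.
rewrite /avg_deg.
replace (INR k / (400 * log2 (INR k)))%Re
  with ((INR k * INR #|VH|) * / (400 * log2 (INR k) * INR #|VH|))%Re by (field; lra).
replace (2 * INR (num_edges EH) / INR #|VH|)%Re
  with ((800 * log2 (INR k) * INR (num_edges EH)) * / (400 * log2 (INR k) * INR #|VH|))%Re
  by (field; lra).
apply: Rmult_le_compat_r => //.
left; apply: Rinv_0_lt_compat; nra.
Qed.
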